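(* Let $M$ be a graded $R$-module. If the map $\psi^q$ is surjective, then the quasi-compact open subsets of $qp.Spec_g(M)$ (with the quasi-Zariski topology) are closed under finite intersection and form an open base.
   Context: $R=\bigoplus_{g\in G}R_g$ is a graded commutative ring with identity graded by a group $G$, $h(R)=\bigcup_g R_g$; $M$ is a graded $R$-module, $h(M)$ its homogeneous elements. $Gr(I)$ is the graded radical of a graded ideal $I$. $(K:_RM)=\{r: rM\subseteq K\}$. Graded prime submodule: proper graded $P$ with $rm\in P$ ($r\in h(R), m\in h(M)$) implying $m\in P$ or $r\in(P:_RM)$. $Gr_M(K)$: intersection of graded prime submodules containing $K$ ($M$ if none). Graded primeful property of $K$: for each graded prime $p\supseteq(K:_RM)$ there is a graded prime submodule $P\supseteq K$ with $(P:_RM)=p$. Graded quasi-primary submodule: proper graded $Q$ with $rm\in Q$ ($r\in h(R),m\in h(M)$) implying $r\in Gr((Q:_RM))$ or $m\in Gr_M(Q)$. $qp.Spec_g(M)$: graded quasi-primary submodules with the graded primeful property. $qp\text{-}V_M^g(K)=\{Q\in qp.Spec_g(M): Gr((Q:_RM))\supseteq Gr((K:_RM))\}$; the quasi-Zariski topology has closed sets exactly these. $\overline R=R/\mathrm{Ann}(M)$. A graded quasi-primary ideal of $\overline R$ is a proper graded ideal $q$ with $ab\in q$ ($a,b$ homogeneous) implying $a\in Gr(q)$ or $b\in Gr(q)$; $qp.Spec_g(\overline R)$ is the set of them. $\psi^q:qp.Spec_g(M)\to qp.Spec_g(\overline R)$ is $\psi^q(Q)=(Q:_RM)/\mathrm{Ann}(M)$.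 *)

(* Defs.v *)
From Stdlib Require List.
From HB Require Import structures.
From mathcomp Require Import all_boot all_algebra.
Set Implicit Arguments.
Unset Strict Implicit.
Unset Printing Implicit Defensive.
Import GRing.Theory.
Local Open Scope ring_scope.

Record group_str := GroupStr {
  gcarrier :> Type;
  gmul : gcarrier -> gcarrier -> gcarrier;
  gone : gcarrier;
  ginv : gcarrier -> gcarrier;
  gmulA : forall x y z, gmul x (gmul y z) = gmul (gmul x y) z;
  gmul1g : forall x, gmul gone x = x;
  gmulVg : forall x, gmul (ginv x) x = gone }.

Section Grading.
Variables (G : group_str) (V : zmodType) (VG : G -> V -> Prop).

Definition hsum (l : seq (G * V)) : V := \sum_(p <- l) p.2.

Definition is_decomp (x : V) (l : seq (G * V)) : Prop :=
  [/\ List.NoDup (map fst l), (forall p, List.In p l -> VG p.1 p.2)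
    & x = hsum l].

Definition direct_sum_grading : Prop :=
  [/\ (forall g, VG g 0 /\ (forall x y, VG g x -> VG g y -> VG g (x - y))),
      (forall x, exists l, is_decomp x l)
    & (forall l, is_decomp 0 l -> forall p, List.In p l -> p.2 = 0)].

Definition homogeneous (x : V) : Prop := exists g, VG g x.
End Grading.

Record graded_ring (G : group_str) (R : comNzRingType) := GradedRing {
  rgrade : G -> R -> Prop;
  rgrade_ds : direct_sum_grading rgrade;
  rgrade_mul : forall g h a b, rgrade g a -> rgrade h b ->
                 rgrade (gmul g h) (a * b) }.

Record graded_module (G : group_str) (R : comNzRingType) (RG : graded_ring G R)
    (M : lmodType R) := GradedModule {
  mgrade : G -> M -> Prop;
  mgrade_ds : direct_sum_grading mgrade;
  mgrade_scale : forall g h r m, rgrade RG g r -> mgrade h m ->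
                 mgrade (gmul g h) (r *: m) }.

Section GradedTheory.
Variables (G : group_str) (R : comNzRingType) (RG : graded_ring G R).
Variables (M : lmodType R) (MG : graded_module RG M).

Definition hR (r : R) := homogeneous (rgrade RG) r.
Definition hM (m : M) := homogeneous (mgrade MG) m.

Definition submodule (K : M -> Prop) : Prop :=
  [/\ K 0, (forall x y, K x -> K y -> K (x + y))
    & (forall r x, K x -> K (r *: x))].
Definition graded_submodule (K : M -> Prop) : Prop :=
  submodule K /\ forall x, K x ->
    exists l, is_decomp (mgrade MG) x l /\ forall p, List.In p l -> K p.2.
Definition proper_sub (K : M -> Prop) : Prop := exists m, ~ K m.

Definition ideal (I : R -> Prop) : Prop :=
  [/\ I 0, (forall x y, I x -> I y -> I (x + y))
    & (forall r x, I x -> I (r * x))].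
Definition graded_ideal (I : R -> Prop) : Prop :=
  ideal I /\ forall x, I x ->
    exists l, is_decomp (rgrade RG) x l /\ forall p, List.In p l -> I p.2.
Definition proper_ideal (I : R -> Prop) : Prop := exists r, ~ I r.

Definition colon (K : M -> Prop) : R -> Prop := fun r => forall m, K (r *: m).
Definition ann : R -> Prop := fun r => forall m : M, r *: m = 0.

Definition Gr (I : R -> Prop) : R -> Prop := fun r =>
  exists l, is_decomp (rgrade RG) r l /\
    forall p, List.In p l -> exists n, I (p.2 ^+ n).

Definition graded_prime_ideal (p : R -> Prop) : Prop :=
  [/\ graded_ideal p, proper_ideal p &
      forall a b, hR a -> hR b -> p (a * b) -> p a \/ p b].

Definition graded_prime_submodule (P : M -> Prop) : Prop :=
  [/\ graded_submodule P, proper_sub P &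
      forall r m, hR r -> hM m -> P (r *: m) -> P m \/ colon P r].

Definition GrM (K : M -> Prop) : M -> Prop := fun m =>
  forall P, graded_prime_submodule P -> (forall x, K x -> P x) -> P m.

Definition primeful (K : M -> Prop) : Prop :=
  forall p, graded_prime_ideal p -> (forall r, colon K r -> p r) ->
    exists P, [/\ graded_prime_submodule P, (forall x, K x -> P x) &
                  forall r, colon P r <-> p r].

Definition graded_quasi_primary_submodule (Q : M -> Prop) : Prop :=
  [/\ graded_submodule Q, proper_sub Q &
      forall r m, hR r -> hM m -> Q (r *: m) -> Gr (colon Q) r \/ GrM Q m].

Definition qpSpec (Q : M -> Prop) : Prop :=
  graded_quasi_primary_submodule Q /\ primeful Q.

Definition qpV (K : M -> Prop) (Q : M -> Prop) : Prop :=
  qpSpec Q /\ forall r, Gr (colon K) r -> Gr (colon Q) r.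

Definition qz_closed (C : (M -> Prop) -> Prop) : Prop :=
  exists K, graded_submodule K /\ forall Q, C Q <-> qpV K Q.
Definition qz_open (U : (M -> Prop) -> Prop) : Prop :=
  exists K, graded_submodule K /\ forall Q, U Q <-> (qpSpec Q /\ ~ qpV K Q).

Definition quasi_compact (A : (M -> Prop) -> Prop) : Prop :=
  forall F : ((M -> Prop) -> Prop) -> Prop,
    (forall U, F U -> qz_open U) ->
    (forall Q, A Q -> exists U, F U /\ U Q) ->
    exists s : seq ((M -> Prop) -> Prop),
      (forall U, List.In U s -> F U) /\
      (forall Q, A Q -> exists U, List.In U s /\ U Q).

(* Graded quasi-primary ideals of Rbar = R/Ann(M), described through the
   correspondence q = I/Ann(M) with I a graded ideal of R containing Ann(M). *)
Definition gqp_ideal_of_quotient (I : R -> Prop) : Prop :=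
  [/\ graded_ideal I, (forall r, ann r -> I r), proper_ideal I &
      forall a b, hR a -> hR b -> I (a * b) -> Gr I a \/ Gr I b].

(* psi^q : Q |-> (Q :_R M)/Ann(M) is surjective onto qp.Spec_g(Rbar) *)
Definition psi_q_surjective : Prop :=
  forall I, gqp_ideal_of_quotient I ->
    exists Q, qpSpec Q /\ forall r, colon Q r <-> I r.

End GradedTheory.

(* Main.v *)
Require Import Defs.
From HB Require Import structures.
From mathcomp Require Import all_boot all_algebra.
From mathcomp Require Import boolp zify ring.
From mathcomp Require classical_sets.
Set Implicit Arguments.
Unset Strict Implicit.
Unset Printing Implicit Defensive.
Import GRing.Theory.
Local Open Scope ring_scope.


Lemma In_cat {T : Type} (x : T) (s1 s2 : seq T) :
  List.In x (s1 ++ s2) <-> List.In x s1 \/ List.In x s2.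
Proof.
elim: s1 => [|y s1 IH] /=; first by split; [right|case].
rewrite IH; tauto.
Qed.

Lemma In_map {T U : Type} (f : T -> U) (x : U) (s : seq T) :
  List.In x (map f s) <-> exists y, List.In y s /\ x = f y.
Proof.
elim: s => [|y s IH] /=; first by split; [|case=> ? []].
rewrite IH; split.
  by case=> [<-|[z [h ->]]]; [exists y; split; [left|]|exists z; split; [right|]].
by case=> z [[<-|h] ->]; [left|right; exists z].
Qed.

Section Gen.
Variables (G : group_str) (V : zmodType) (VG : G -> V -> Prop).
Hypothesis Hds : direct_sum_grading VG.

Lemma VG0 g : VG g 0.
Proof. by case: Hds => H _ _; case: (H g). Qed.
Lemma VGB g x y : VG g x -> VG g y -> VG g (x - y).
Proof. by case: Hds => H _ _; case: (H g) => _; apply. Qed.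
Lemma VGN g x : VG g x -> VG g (- x).
Proof. by move=> h; rewrite -sub0r; apply: VGB => //; apply: VG0. Qed.
Lemma VGD g x y : VG g x -> VG g y -> VG g (x + y).
Proof. by move=> h1 h2; rewrite -[y]opprK; apply: VGB => //; apply: VGN. Qed.

Lemma hsum_nil : hsum ([::] : seq (G * V)) = 0.
Proof. by rewrite /hsum big_nil. Qed.
Lemma hsum_cons (p : G * V) l : hsum (p :: l) = p.2 + hsum l :> V.
Proof. by rewrite /hsum big_cons. Qed.
Lemma hsum_cat (l1 l2 : seq (G * V)) : hsum (l1 ++ l2) = hsum l1 + hsum l2 :> V.
Proof. by rewrite /hsum big_cat. Qed.

Fixpoint ins (p : G * V) (l : seq (G * V)) : seq (G * V) :=
  match l with
  | [::] => [:: p]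
  | q :: l' => if pselect (q.1 = p.1) then (q.1, q.2 + p.2) :: l'
               else q :: ins p l'
  end.

Definition regroup (l : seq (G * V)) := foldr ins [::] l.

Lemma in_map_fst_ins p l g :
  List.In g (map fst (ins p l)) <-> g = p.1 \/ List.In g (map fst l).
Proof.
elim: l => [|q l IH] /=; first by split; [case=> // ->; left|case=> [->|[]]; left].
case: pselect => [e|ne] /=.
  by split; [case=> [<-|h]; right; [left|right]|case=> [->|[<-|h]]; [left|left|right]].
rewrite IH; split.
  by case=> [<-|[->|h]]; [right; left|left|right; right].
by case=> [->|[<-|h]]; [right; left|left|right; right].
Qed.

Lemma nodup_ins p l : List.NoDup (map fst l) -> List.NoDup (map fst (ins p l)).
Proof.
elim: l => [|q l IH] /=; first by move=> _; constructor; [case|constructor].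
case: pselect => [e|ne] //= nd; inversion nd; subst.
constructor; last by apply: IH.
by rewrite in_map_fst_ins; case=> // /esym.
Qed.

Lemma hsum_ins p l : hsum (ins p l) = p.2 + hsum l.
Proof.
elim: l => [|q l IH] /=; first by rewrite hsum_cons hsum_nil addr0.
case: pselect => [?|?]; rewrite !hsum_cons /=.
  by rewrite addrCA addrA.
by rewrite IH addrCA.
Qed.

Lemma ins_P (P : V -> Prop) p l :
  (forall x y, P x -> P y -> P (x + y)) ->
  VG p.1 p.2 -> P p.2 -> (forall q, List.In q l -> VG q.1 q.2 /\ P q.2) ->
  forall q, List.In q (ins p l) -> VG q.1 q.2 /\ P q.2.
Proof.
move=> PD hp Pp; elim: l => [|q0 l IH] /= hl q.
  by case=> // <-.
case: pselect => [e|ne] /=.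
  case=> [<-|h]; last by apply: hl; right.
  have [h1 h2] := hl q0 (or_introl erefl).
  by split; [apply: VGD => //; rewrite e|apply: PD].
case=> [<-|h]; first by apply: hl; left.
by apply: IH => // q' h'; apply: hl; right.
Qed.

Lemma regroup_spec (P : V -> Prop) l :
  P 0 -> (forall x y, P x -> P y -> P (x + y)) ->
  (forall q, List.In q l -> VG q.1 q.2 /\ P q.2) ->
  is_decomp VG (hsum l) (regroup l) /\
  (forall q, List.In q (regroup l) -> P q.2).
Proof.
move=> P0 PD; elim: l => [|p l IH] hl /=.
  rewrite hsum_nil; split; [split; [exact: List.NoDup_nil|by []|] |by []]. by rewrite /hsum big_nil.
have [[nd hv hs] hP] := IH (fun q h => hl q (or_intror h)).
have [hp1 hp2] := hl p (or_introl erefl).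
have H := ins_P PD hp1 hp2 (fun q h => conj (hv q h) (hP q h)).
split; last by move=> q /H [].
split; first exact: nodup_ins.
  by move=> q /H [].
by rewrite hsum_ins hsum_cons hs.
Qed.

Definition comp (l : seq (G * V)) (g : G) : V :=
  \sum_(p <- l) (if pselect (p.1 = g) then p.2 else 0).

Lemma comp_cons p l g :
  comp (p :: l) g = (if pselect (p.1 = g) then p.2 else 0) + comp l g.
Proof. by rewrite /comp big_cons. Qed.
Lemma comp_nil g : comp [::] g = 0.
Proof. by rewrite /comp big_nil. Qed.
Lemma comp_cat l1 l2 g : comp (l1 ++ l2) g = comp l1 g + comp l2 g.
Proof. by rewrite /comp big_cat. Qed.

Lemma comp_ins p l g : comp (ins p l) g = comp [:: p] g + comp l g.
Proof.
elim: l => [|q l IH] /=; first by rewrite comp_nil addr0.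
case: pselect => [e|ne] /=.
  rewrite !comp_cons comp_nil addr0 /=; rewrite e.
  by case: pselect => [?|?]; rewrite ?addr0 ?add0r // addrA [p.2 + _]addrC.
by rewrite !comp_cons IH comp_cons comp_nil addr0 addrCA.
Qed.

Lemma comp_regroup l g : comp (regroup l) g = comp l g.
Proof.
elim: l => [|p l IH] //=.
by rewrite comp_ins IH comp_cons comp_cons comp_nil addr0.
Qed.

Lemma comp_zero l g : (forall q, List.In q l -> q.2 = 0) -> comp l g = 0.
Proof.
elim: l => [|p l IH] h; first exact: comp_nil.
rewrite comp_cons IH; last by move=> q hq; apply: h; right.
by rewrite (h p (or_introl erefl)); case: pselect => [?|?]; rewrite addr0.
Qed.

Lemma comp_notin l g : ~ List.In g (map fst l) -> comp l g = 0.
Proof.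
elim: l => [|p l IH] h; first exact: comp_nil.
rewrite comp_cons IH; last by move=> hh; apply: h; right.
case: pselect => [e|?]; last by rewrite addr0.
exfalso; apply: h => /=; left; exact: e.
Qed.

Lemma in_map_fst (p : G * V) l : List.In p l -> List.In p.1 (map fst l).
Proof. elim: l => [|q l IH] //= [->|h]; [by left|right; exact: IH]. Qed.

Lemma comp_in l p : List.NoDup (map fst l) -> List.In p l -> comp l p.1 = p.2.
Proof.
elim: l => [|q l IH] //= nd; inversion nd; subst => hin.
case: hin => [<-|h]; first by rewrite comp_cons comp_notin // addr0; case: pselect.
have [e|ne] := pselect (q.1 = p.1).
  by exfalso; apply: H1; rewrite e; apply: in_map_fst.
by rewrite comp_cons; case: pselect => [?|?] //; rewrite add0r IH.
Qed.

Definition negl (l : seq (G * V)) := map (fun q => (q.1, - q.2)) l.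
Lemma comp_negl l g : comp (negl l) g = - comp l g.
Proof.
elim: l => [|p l IH] /=; first by rewrite !comp_nil oppr0.
by rewrite !comp_cons IH opprD; case: pselect => [?|?] //=; rewrite oppr0.
Qed.
Lemma hsum_negl l : hsum (negl l) = - hsum l.
Proof.
elim: l => [|p l IH] /=; first by rewrite !hsum_nil oppr0.
by rewrite !hsum_cons IH opprD.
Qed.
Lemma in_negl q l : List.In q (negl l) -> exists p, List.In p l /\ q = (p.1, - p.2).
Proof.
elim: l => [|p l IH] //= [<-|h]; first by exists p; split; [left|].
by have [p' [h1 h2]] := IH h; exists p'; split; [right|].
Qed.

Lemma comp_uniq x l1 l2 g :
  is_decomp VG x l1 -> is_decomp VG x l2 -> comp l1 g = comp l2 g.
Proof.
move=> [n1 v1 s1] [n2 v2 s2].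
have PT : forall q, List.In q (l1 ++ negl l2) -> VG q.1 q.2 /\ True.
  move=> q /In_cat [h|/in_negl [p [hp ->]]]; split => //; [exact: v1|apply: VGN; exact: (v2 p hp)].
have [hd _] := regroup_spec (P := fun _ => True) (l := l1 ++ negl l2) I (fun _ _ _ _ => I) PT.
move: hd; rewrite hsum_cat hsum_negl -s1 -s2 subrr => hd.
case: Hds => _ _ H0.
have := comp_zero g (H0 _ hd); rewrite comp_regroup comp_cat comp_negl.
by move/eqP; rewrite subr_eq0 => /eqP.
Qed.

Lemma decomp_uniq x l1 l2 p :
  is_decomp VG x l1 -> is_decomp VG x l2 -> List.In p l1 ->
  p.2 = 0 \/ exists q, List.In q l2 /\ q.1 = p.1 /\ q.2 = p.2.
Proof.
move=> d1 d2 hp; have E := comp_uniq p.1 d1 d2.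
case: (d1) (d2) => n1 _ _ [n2 _ _]; rewrite (comp_in n1 hp) in E.
case: (pselect (List.In p.1 (map fst l2))) => h.
  move/In_map: h => [q [hq e]]; right; exists q; split => //; split => //.
  by rewrite E e (comp_in n2 hq).
by left; rewrite E comp_notin.
Qed.

Lemma hsum_P (P : V -> Prop) (l : seq (G * V)) : P 0 -> (forall x y, P x -> P y -> P (x + y)) ->
  (forall q, List.In q l -> P q.2) -> P (hsum l).
Proof.
move=> P0 PD; elim: l => [|p l IH] h; first by rewrite hsum_nil.
by rewrite hsum_cons; apply: PD; [apply: h; left|apply: IH => q hq; apply: h; right].
Qed.

Lemma single_decomp g x : VG g x -> is_decomp VG x [:: (g, x)].
Proof.
move=> h; split; first by constructor; [case|constructor].
  by move=> q [<-|[]].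
by rewrite hsum_cons hsum_nil addr0.
Qed.

End Gen.


Lemma NoDup_map_inj {T U : Type} (f : T -> U) (s : seq T) :
  (forall x y, f x = f y -> x = y) -> List.NoDup s -> List.NoDup (map f s).
Proof.
move=> inj; elim: s => [|x s IH] /= nd; first exact: List.NoDup_nil.
inversion nd; subst; constructor; last exact: IH.
by move/In_map => [y [hy /inj e]]; apply: H1; rewrite e.
Qed.

Section Grp.
Variable G : group_str.
Lemma gcancel_l (d x y : G) : gmul d x = gmul d y -> x = y.
Proof.
move=> e; rewrite -(gmul1g x) -(gmul1g y) -(gmulVg d) -!gmulA e //.
Qed.
Lemma gmulgV (x : G) : gmul x (ginv x) = gone G.
Proof.
set y := ginv x.
have -> : gmul x y = gmul (gmul (ginv y) y) (gmul x y) by rewrite gmulVg gmul1g.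
by rewrite -gmulA (gmulA y) gmulVg gmul1g gmulVg.
Qed.
Lemma gmulg1 (x : G) : gmul x (gone G) = x.
Proof. by rewrite -(gmulVg x) gmulA gmulgV gmul1g. Qed.
Lemma gcancel_r (d x y : G) : gmul x d = gmul y d -> x = y.
Proof.
move=> e.
have : gmul (gmul x d) (ginv d) = gmul (gmul y d) (ginv d) by rewrite e.
by rewrite -!gmulA gmulgV !gmulg1.
Qed.
End Grp.

Section Main.
Variables (G : group_str) (R : comNzRingType) (RG : graded_ring G R).
Variables (M : lmodType R) (MG : graded_module RG M).

Definition rad (I : R -> Prop) (c : R) := exists n, I (c ^+ n).

Lemma hpowS g c n : rgrade RG g c -> hR RG (c ^+ n.+1).
Proof.
move=> h; elim: n => [|n [g' IH]]; first by exists g; rewrite expr1.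
by exists (gmul g g'); rewrite exprS; apply: rgrade_mul.
Qed.

Lemma hpowS' c n : hR RG c -> hR RG (c ^+ n.+1).
Proof. by case=> g h; apply: hpowS h. Qed.

Lemma ideal_mulr (I : R -> Prop) x r : ideal I -> I x -> I (x * r).
Proof. by case=> _ _ h hx; rewrite mulrC; apply: h. Qed.

Lemma rad_gr (I : R -> Prop) c : hR RG c -> rad I c -> Gr RG I c.
Proof.
move=> [g hg] hr; exists [:: (g, c)]; split; first exact: single_decomp.
by move=> p [<-|[]].
Qed.

Lemma gr_rad (I : R -> Prop) c : I 0 -> hR RG c -> Gr RG I c -> rad I c.
Proof.
move=> I0 [g hg] [l [dl hl]].
have := decomp_uniq (rgrade_ds RG) (p := (g, c)) (single_decomp hg) dl (or_introl erefl).
case=> [/= ->|[q [hq [_ /= <-]]]]; last exact: hl.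
by exists 1%N; rewrite expr1.
Qed.

Lemma rad_pow (I : R -> Prop) c n : rad I (c ^+ n) -> rad I c.
Proof. by case=> k h; exists (n * k)%N; rewrite exprM. Qed.

Lemma rad_mul (I : R -> Prop) c d : ideal I -> rad I c -> rad I (c * d).
Proof.
move=> hI [n h]; exists n; rewrite exprMn; exact: ideal_mulr.
Qed.

Lemma ideal_sum (I : R -> Prop) (F : nat -> R) n : ideal I ->
  (forall i, (i < n)%N -> I (F i)) -> I (\sum_(i < n) F i).
Proof.
move=> [I0 ID _]; elim: n => [|n IH] h; first by rewrite big_ord0.
rewrite big_ord_recr /=; apply: ID; last exact: h.
by apply: IH => i hi; apply: h; apply: ltnW.
Qed.

Lemma ideal_muln (I : R -> Prop) x k : ideal I -> I x -> I (x *+ k).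
Proof.
move=> [I0 ID _] hx; elim: k => [|k IH]; first by rewrite mulr0n.
by rewrite mulrS; apply: ID.
Qed.

Lemma rad_add (I : R -> Prop) x y : ideal I -> rad I x -> rad I y -> rad I (x + y).
Proof.
move=> hI [n hn] [m hm]; exists (n + m)%N.
have [I0 ID IM] := hI.
rewrite exprDn; apply: (big_ind I) => // i _; apply: ideal_muln => //.
have hi := ltn_ord i.
case: (leqP n (n + m - i)) => h.
  rewrite -(subnK h) exprD mulrAC; exact: IM.
have hi' : (m <= i)%N by lia.
by rewrite -(subnK hi') exprD mulrA; exact: IM.
Qed.

Lemma big_In_ind {T : Type} {V : zmodType} (P : V -> Prop) (F : T -> V) (s : seq T) :
  P 0 -> (forall x y, P x -> P y -> P (x + y)) -> (forall t, List.In t s -> P (F t)) ->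
  P (\sum_(t <- s) F t).
Proof.
move=> P0 PD; elim: s => [|t s IH] h; first by rewrite big_nil.
rewrite big_cons; apply: PD; first by apply: h; left.
by apply: IH => u hu; apply: h; right.
Qed.

Lemma colon_ideal (Q : M -> Prop) : submodule Q -> ideal (colon Q).
Proof.
move=> [Q0 QD QZ]; split.
- by move=> m; rewrite scale0r.
- by move=> x y hx hy m; rewrite scalerDl; apply: QD.
- by move=> r x hx m; rewrite -scalerA; apply: QZ.
Qed.

Lemma colon_graded (Q : M -> Prop) : graded_submodule MG Q ->
  forall r, colon Q r -> exists l, is_decomp (rgrade RG) r l /\
    forall p, List.In p l -> colon Q p.2.
Proof.
move=> [[Q0 QD QZ] QG] r hr.
case: (rgrade_ds RG) => _ Hex _; have [l dl] := Hex r.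
exists l; split => // p hp m.
case: (mgrade_ds MG) => _ HexM _; have [lm [ndm vm sm]] := HexM m.
rewrite sm /hsum scaler_sumr; apply: big_In_ind => // q hq.
case: (dl) => ndl vl sl.
set L := map (fun p' => (gmul p'.1 q.1, p'.2 *: q.2)) l.
have dL : is_decomp (mgrade MG) (r *: q.2) L.
  split.
  - rewrite /L -map_comp; have -> : (fst \o (fun p' : G * R => (gmul p'.1 q.1, p'.2 *: q.2))) = (fun g => gmul g q.1) \o fst by [].
    rewrite map_comp; apply: NoDup_map_inj => // x y; exact: gcancel_r.
  - move=> p' /In_map [p'' [h ->]] /=; apply: mgrade_scale; [exact: vl|exact: vm].
  - by rewrite /hsum big_map /= {1}sl /hsum scaler_suml.
have [lQ [dQ hQ]] := QG _ (hr q.2).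
have hin : List.In (gmul p.1 q.1, p.2 *: q.2) L by apply/In_map; exists p.
case: (decomp_uniq (mgrade_ds MG) dL dQ hin) => [/= ->|[q' [hq' [_ /= <-]]]]; first exact: Q0.
exact: hQ.
Qed.

Definition Istar (I : R -> Prop) (x : R) :=
  exists l, is_decomp (rgrade RG) x l /\ forall q, List.In q l -> I q.2.

Fixpoint prodl (lr lx : seq (G * R)) : seq (G * R) :=
  match lr with
  | [::] => [::]
  | p :: lr' => map (fun q => (gmul p.1 q.1, p.2 * q.2)) lx ++ prodl lr' lx
  end.

Lemma hsum_prodl lr lx : hsum (prodl lr lx) = hsum lr * hsum lx.
Proof.
elim: lr => [|p lr IH] /=; first by rewrite /hsum big_nil mul0r.
rewrite hsum_cat IH hsum_cons mulrDl; congr (_ + _).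
by rewrite /hsum big_map mulr_sumr; apply: eq_bigr.
Qed.

Lemma In_prodl u lr lx : List.In u (prodl lr lx) ->
  exists p q, [/\ List.In p lr, List.In q lx & u = (gmul p.1 q.1, p.2 * q.2)].
Proof.
elim: lr => [|p lr IH] /=; first by [].
move=> /In_cat [/In_map [q [hq ->]]|/IH [p' [q [h1 h2 ->]]]].
  by exists p, q; split => //; left.
by exists p', q; split => //; right.
Qed.

Lemma Istar_sub (A : R -> Prop) x : ideal A -> Istar A x -> A x.
Proof.
move=> [A0 AD _] [l [[_ _ ->] hl]]; exact: hsum_P.
Qed.

Lemma Istar_single (A : R -> Prop) x : hR RG x -> A x -> Istar A x.
Proof.
move=> [g hg] hx; exists [:: (g, x)]; split; first exact: single_decomp.
by move=> q [<-|[]].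
Qed.

Lemma Istar_graded (A : R -> Prop) : ideal A -> graded_ideal RG (Istar A).
Proof.
move=> hA; have [A0 AD AM] := hA.
have ds := rgrade_ds RG.
split; first split.
- exists [::]; split => //; split => //; [exact: List.NoDup_nil|by rewrite hsum_nil].
- move=> x y [lx [[nx vx sx] hx]] [ly [[ny vy sy] hy]].
  have := regroup_spec ds (P := A) (l := lx ++ ly) A0 AD.
  rewrite hsum_cat -sx -sy; case.
    by move=> q /In_cat [h|h]; split; [exact: vx|exact: hx|exact: vy|exact: hy].
  by move=> d h; exists (regroup (lx ++ ly)).
- move=> r x [lx [[nx vx sx] hx]].
  case: ds => _ Hex _; have [lr [nr vr sr]] := Hex r.
  have := regroup_spec (rgrade_ds RG) (P := A) (l := prodl lr lx) A0 AD.
  rewrite hsum_prodl -sr -sx; case.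
    move=> q /In_prodl [p [q' [h1 h2 ->]]] /=; split.
      by apply: rgrade_mul; [exact: vr|exact: vx].
    by apply: AM; exact: hx.
  by move=> d h; exists (regroup (prodl lr lx)).
- move=> x [l [dl hl]]; exists l; split => // q hq.
  case: (dl) => _ vl _; apply: Istar_single; first by exists q.1; exact: vl.
  exact: hl.
Qed.

Lemma exists_gprime (I : R -> Prop) f : ideal I -> hR RG f ->
  (forall n, ~ I (f ^+ n)) ->
  exists p, [/\ graded_prime_ideal RG p, (forall x, Istar I x -> p x) & ~ p f].
Proof.
move=> hI hf hIf.
pose valid (A : R -> Prop) := [/\ ideal A, (forall x, I x -> A x) & forall n, ~ A (f ^+ n)].
pose P (A : R -> Prop) := A = classical_sets.set0 \/ valid A.
have memP : forall A x, P A -> A x -> valid A.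
  by move=> A x [->|//].
have [A [PA Amax]] : exists A, P A /\ forall B, classical_sets.proper A B -> ~ P B.
  apply: classical_sets.Zorn_bigcup => F FP Ftot.
  case: (pselect (exists X, F X /\ valid X)) => [[X0 [FX0 vX0]]|nv]; last first.
    left; apply: funext => x; apply: propext; split => //.
    case=> X FX Xx; apply: nv; exists X; split => //; exact: (memP _ _ (FP X FX) Xx).
  right; have [[X00 _ _] IX0 _] := vX0.
  have two : forall x y, classical_sets.bigcup F id x -> classical_sets.bigcup F id y ->
      exists X, [/\ F X, X x & X y].
    move=> x y [X1 F1 h1] [X2 F2 h2].
    case: (Ftot X1 X2 F1 F2) => s; [exists X2; split => //; exact: s|exists X1; split => //; exact: s].
  split; first split.
  - by exists X0.
  - move=> x y hx hy; have [X [FX hx' hy']] := two _ _ hx hy.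
    have [[_ XD _] _ _] := memP _ _ (FP X FX) hx'.
    by exists X => //; apply: XD.
  - move=> r x [X FX hx]; have [[_ _ XM] _ _] := memP _ _ (FP X FX) hx.
    by exists X => //; apply: XM.
  - by move=> x hx; exists X0 => //; apply: IX0.
  - move=> n [X FX hx]; have [_ _ Xn] := memP _ _ (FP X FX) hx; exact: (Xn n).
have vA : valid A.
  case: PA => // A0; exfalso; apply: (Amax I); last by right; split => //; move=> x.
  rewrite A0; split; first by move=> x [].
  by move=> h; have [I0 _ _] := hI; exact: (h 0 I0).
have [[A0 hAD hAM] IA Af] := vA.
have Aprime : forall a b, A (a * b) -> A a \/ A b.
  move=> a b hab; case: (pselect (A a)) => ha; first by left.
  case: (pselect (A b)) => hb; first by right.
  exfalso.
  have ext : forall c, ~ A c -> exists n y z, A y /\ f ^+ n = y + z * c.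
    move=> c hc; case: (pselect (exists n y z, A y /\ f ^+ n = y + z * c)) => // hn.
    exfalso; apply: (Amax (fun x => exists y z, A y /\ x = y + z * c)).
      split; first by move=> x hx; exists x, 0; split => //; rewrite mul0r addr0.
      move=> h; apply: hc; apply: h; exists 0, 1; split => //; by rewrite add0r mul1r.
    right; split; first split.
    - by exists 0, 0; split => //; rewrite mul0r addr0.
    - move=> x1 x2 [y1 [z1 [h1 ->]]] [y2 [z2 [h2 ->]]].
      exists (y1 + y2), (z1 + z2); split; [exact: hAD|by rewrite mulrDl addrACA].
    - move=> r x [y [z [h ->]]]; exists (r * y), (r * z); split; first exact: hAM.
      by rewrite mulrDr mulrA.
    - by move=> x hx; exists x, 0; split; [exact: IA|rewrite mul0r addr0].
    - by move=> n [y [z [hy e]]]; apply: hn; exists n, y, z.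
  have [n [y [z [hy en]]]] := ext a ha.
  have [k [y' [z' [hy' ek]]]] := ext b hb.
  apply: (Af (n + k)%N); rewrite exprD en ek.
  have -> : (y + z * a) * (y' + z' * b) = (y' + z' * b) * y + (z * a) * y' + (z * z') * (a * b) by ring.
  apply: (hAD); first apply: (hAD).
  1-3: by apply: (hAM).
exists (Istar A); split.
- split; first exact: Istar_graded.
  + by exists f => /(Istar_sub (And3 A0 hAD hAM)) h; apply: (Af 1%N); rewrite expr1.
  + move=> a b ha hb /(Istar_sub (And3 A0 hAD hAM)) /Aprime [h|h].
      by left; apply: Istar_single.
    by right; apply: Istar_single.
- by move=> x [l [dl hl]]; exists l; split => // q hq; apply: IA; apply: hl.
- by move=> /(Istar_sub (And3 A0 hAD hAM)) h; apply: (Af 1%N); rewrite expr1.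
Qed.

Lemma prime_pow (p : R -> Prop) b n : graded_prime_ideal RG p -> hR RG b ->
  p (b ^+ n.+1) -> p b.
Proof.
move=> [_ _ pr] hb; elim: n => [|n IH]; first by rewrite expr1.
move=> h; case: (pr _ _ hb (hpowS' n hb) h) => [//|]; exact: IH.
Qed.

Lemma qp_sub (Q : M -> Prop) : qpSpec MG Q -> submodule Q.
Proof. by case=> [[[sQ _] _ _] _]. Qed.

Lemma colon0 (Q : M -> Prop) : submodule Q -> colon Q 0.
Proof. by move=> [Q0 _ _] m; rewrite scale0r. Qed.

Lemma qpV_char (K Q : M -> Prop) : qpV MG K Q <->
  qpSpec MG Q /\ forall c, hR RG c -> rad (colon K) c -> rad (colon Q) c.
Proof.
split.
  move=> [hQ h]; split => // c hc hr; apply: gr_rad => //.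
    exact: colon0 (qp_sub hQ).
  by apply: h; apply: rad_gr.
move=> [hQ h]; split => // r [l [[nl vl sl] hl]]; exists l; split => // q hq.
by apply: h; [exists q.1; exact: vl|exact: hl].
Qed.

Lemma notqpV (K Q : M -> Prop) : qpSpec MG Q -> ~ qpV MG K Q ->
  exists c, [/\ hR RG c, rad (colon K) c & ~ rad (colon Q) c].
Proof.
move=> hQ nV; case: (pselect (exists c, [/\ hR RG c, rad (colon K) c & ~ rad (colon Q) c])) => // hn.
exfalso; apply: nV; apply/qpV_char; split => // c hc hr.
case: (pselect (rad (colon Q) c)) => // nr; exfalso; apply: hn; by exists c.
Qed.

Lemma hM_scale r m g : hR RG r -> mgrade MG g m -> hM MG (r *: m).
Proof. by case=> h hr hm; exists (gmul h g); apply: mgrade_scale. Qed.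

Lemma qp_prime (Q : M -> Prop) a b : qpSpec MG Q -> hR RG a -> hR RG b ->
  rad (colon Q) (a * b) -> rad (colon Q) a \/ rad (colon Q) b.
Proof.
move=> hQ ha hb [n hn].
have [[[sQ gQ] propQ qpQ] pfQ] := hQ.
case: (pselect (rad (colon Q) a)) => nra; first by left.
right; case: (pselect (rad (colon Q) b)) => // nrb; exfalso.
case: n hn => [|N] hn; first by apply: nra; exists 0%N; rewrite expr0; rewrite expr0 in hn.
have hG : forall g m, mgrade MG g m -> GrM MG Q (b ^+ N.+1 *: m).
  move=> g m hm.
  have := qpQ (a ^+ N.+1) (b ^+ N.+1 *: m) (hpowS' N ha) (hM_scale (hpowS' N hb) hm).
  rewrite scalerA -exprMn; case; [exact: hn| |exact: id].
  move=> h; exfalso; apply: nra; apply: (@rad_pow _ _ N.+1); apply: gr_rad => //.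
    exact: colon0.
  exact: hpowS'.
have [p [gp Ip nbp]] := exists_gprime (colon_ideal sQ) hb (fun n h => nrb (ex_intro _ n h)).
have Qp : forall r, colon Q r -> p r.
  move=> r hr; apply: Ip; have [l [dl hl]] := colon_graded (conj sQ gQ) hr.
  by exists l.
have [P [gpP QP cP]] := pfQ p gp Qp.
apply: nbp; apply: (@prime_pow _ _ N gp hb); apply/cP => m.
have [[[P0 PD PZ] _] _ _] := gpP.
case: (mgrade_ds MG) => _ Hex _; have [lm [nm vm sm]] := Hex m.
rewrite sm /hsum scaler_sumr; apply: big_In_ind => // q hq.
exact: (hG _ _ (vm q hq) P gpP QP).
Qed.

Definition Dset (f : R) (Q : M -> Prop) := qpSpec MG Q /\ ~ rad (colon Q) f.

Definition Kf (f : R) (x : M) := exists m, x = f *: m.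

Lemma Kf_graded f : hR RG f -> graded_submodule MG (Kf f).
Proof.
move=> [g hg].
have sK : submodule (Kf f).
  split.
  - by exists 0; rewrite scaler0.
  - by move=> x y [m ->] [m' ->]; exists (m + m'); rewrite scalerDr.
  - by move=> r x [m ->]; exists (r *: m); rewrite !scalerA mulrC.
have [K0 KD _] := sK.
split => // x [m ->].
case: (mgrade_ds MG) => _ Hex _; have [lm [nm vm sm]] := Hex m.
have := regroup_spec (mgrade_ds MG) (P := Kf f)
   (l := map (fun q => (gmul g q.1, f *: q.2)) lm) K0 KD.
case.
  move=> q /In_map [q' [hq ->]] /=; split; first by apply: mgrade_scale => //; exact: vm.
  by exists q'.2.
have -> : hsum [seq (gmul g q.1, f *: q.2) | q <- lm] = f *: m.
  by rewrite sm /hsum big_map scaler_sumr.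
by move=> d h; exists (regroup [seq (gmul g q.1, f *: q.2) | q <- lm]).
Qed.

Lemma qpV_Kf f Q : hR RG f -> (qpV MG (Kf f) Q <-> qpSpec MG Q /\ rad (colon Q) f).
Proof.
move=> hf; rewrite qpV_char; split.
  move=> [hQ h]; split => //; apply: h => //; exists 1%N => m; rewrite expr1.
  by exists m.
move=> [hQ [k hk]]; split => // c hc [n hn].
have step : forall (j : nat) (m : M), exists m', c ^+ (n * j) *: m = f ^+ j *: m'.
  elim=> [|j IH] m; first by exists m; rewrite muln0 !expr0.
  have [m' e] := IH m; have [m'' e'] := hn m'.
  exists m''; rewrite mulnS exprD -scalerA e scalerA mulrC -scalerA e' scalerA -exprSr.
  by [].
exists (n * k)%N => m; have [m' ->] := step k m; exact: hk.
Qed.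

Lemma Dset_open f : hR RG f -> qz_open MG (Dset f).
Proof.
move=> hf; exists (Kf f); split; first exact: Kf_graded.
move=> Q; rewrite qpV_Kf //; split.
  by move=> [hQ nr]; split => // [[_ h]].
move=> [hQ h]; split => // hr; exact: h.
Qed.

Lemma zero_graded : graded_submodule MG (fun m => m = 0).
Proof.
split; first split => //.
- by move=> x y -> ->; rewrite addr0.
- by move=> r x ->; rewrite scaler0.
move=> x ->; exists [::]; split => //; split => //; first exact: List.NoDup_nil.
by rewrite /hsum big_nil.
Qed.

Lemma Dset_qc f : psi_q_surjective MG -> hR RG f -> quasi_compact MG (Dset f).
Proof.
move=> surj hf F Fo Fcov.
pose S h := hR RG h /\ exists U, F U /\ forall Q, qpSpec MG Q -> ~ rad (colon Q) h -> U Q.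
pose I x := exists l : seq (R * R), (forall p, List.In p l -> S p.2) /\
   exists a, ann M a /\ x = \sum_(p <- l) p.1 * p.2 + a.
have IL : ideal I.
  split.
  - exists [::]; split => //; exists 0; split; first by move=> m; rewrite scale0r.
    by rewrite big_nil addr0.
  - move=> x y [l1 [h1 [a1 [ha1 ->]]]] [l2 [h2 [a2 [ha2 ->]]]].
    exists (l1 ++ l2); split; first by move=> p /In_cat [h|h]; [exact: h1|exact: h2].
    exists (a1 + a2); split; first by move=> m; rewrite scalerDl ha1 ha2 addr0.
    by rewrite big_cat addrACA.
  - move=> r x [l [hl [a [ha ->]]]].
    exists (map (fun p => (r * p.1, p.2)) l); split.
      by move=> p /In_map [q [hq ->]]; exact: (hl q hq).
    exists (r * a); split; first by move=> m; rewrite -scalerA ha scaler0.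
    by rewrite big_map mulrDr mulr_sumr; congr (_ + _); apply: eq_bigr => p _ /=; rewrite mulrA.
have [n hIn] : exists n, I (f ^+ n).
  case: (pselect (exists n, I (f ^+ n))) => // hno; exfalso.
  have [p [gp Ip nfp]] := exists_gprime IL hf (fun n h => hno (ex_intro _ n h)).
  have [[[p0 pD pM] pg] pprop pprime] := gp.
  have hann : forall r, ann M r -> p r.
    move=> r hr; apply: Ip.
    have [l [dl hl]] := colon_graded zero_graded hr.
    exists l; split => // q hq; exists [::]; split => //; exists q.2; split; first exact: hl.
    by rewrite big_nil add0r.
  have gq : gqp_ideal_of_quotient RG M p.
    split; [by split|exact: hann|exact: pprop|].
    move=> a b ha hb /(pprime _ _ ha hb) [h|h]; [left|right]; apply: rad_gr => //;
      by exists 1%N; rewrite expr1.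
  have [Q0 [hQ0 cQ0]] := surj p gq.
  have DQ0 : Dset f Q0.
    split => // [[k hk]]; apply: nfp; have pk := (cQ0 _).1 hk.
    move: pk; case: k {hk} => [|k] pk; last exact: prime_pow gp hf pk.
    by rewrite expr0 in pk; rewrite -[f]mulr1; apply: pM.
  have [U [FU UQ0]] := Fcov Q0 DQ0.
  have [K [gK eK]] := Fo U FU.
  have [_ nV] := (eK Q0).1 UQ0.
  have [c [hc rKc nrc]] := notqpV hQ0 nV.
  have Sc : S c.
    split => //; exists U; split => // Q hQ nr; apply/eK; split => //.
    by move=> /qpV_char [_ h]; apply: nr; apply: h.
  have Ic : I c.
    exists [:: (1, c)]; split; first by move=> q [<-|[]].
    exists 0; split; first by move=> m; rewrite scale0r.
    by rewrite big_cons big_nil /= mul1r !addr0.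
  apply: nrc; exists 1%N; rewrite expr1; apply/cQ0; apply: Ip; exact: Istar_single.
case: hIn => l [hl [a [ha e]]].
have [s [sF scov]] : exists s, (forall U, List.In U s -> F U) /\
    forall Q, qpSpec MG Q -> (forall U, List.In U s -> ~ U Q) ->
      forall p, List.In p l -> rad (colon Q) p.2.
  elim: (l) hl => [|p l' IH] hl'; first by exists [::]; split.
  have [s [sF scov]] := IH (fun q hq => hl' q (or_intror hq)).
  have [_ [U [FU hU]]] := hl' p (or_introl erefl).
  exists (U :: s); split.
    by move=> U' [<-|h]; [exact: FU|exact: sF].
  move=> Q hQ nU q [<-|hq].
    case: (pselect (rad (colon Q) p.2)) => // nr; exfalso.
    by apply: (nU U (or_introl erefl)); apply: hU.
  by apply: scov => // U' hU'; apply: nU; right.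
exists s; split => // Q [hQ nrf].
case: (pselect (exists U, List.In U s /\ U Q)) => // hno; exfalso.
have allr := scov Q hQ (fun U hU hUQ => hno (ex_intro _ U (conj hU hUQ))).
have sQ := qp_sub hQ.
have cI := colon_ideal sQ.
apply: nrf; apply: (@rad_pow _ _ n); rewrite e; apply: rad_add => //.
  apply: big_In_ind.
  - by exists 1%N; rewrite expr1; apply: colon0.
  - by move=> x y hx hy; apply: rad_add.
  - by move=> p hp; rewrite mulrC; apply: rad_mul => //; apply: allr.
exists 1%N; rewrite expr1 => m; rewrite ha; by case: sQ.
Qed.

Lemma basis_D (U : (M -> Prop) -> Prop) Q : qz_open MG U -> U Q ->
  exists f, [/\ hR RG f, Dset f Q & forall Q', Dset f Q' -> U Q'].
Proof.
move=> [K [gK eK]] /eK [hQ nV].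
have [c [hc [n hn] nrc]] := notqpV hQ nV.
have cK := colon_ideal gK.1.
have hf : colon K (c ^+ n.+1) by rewrite exprS; case: cK => _ _; apply.
exists (c ^+ n.+1); split.
- exact: hpowS'.
- by split => // /rad_pow.
- move=> Q' [hQ' nr]; apply/eK; split => // /qpV_char [_ h]; apply: nr; apply: h.
    exact: hpowS'.
  by exists 1%N; rewrite expr1.
Qed.

Lemma Kint_graded (K1 K2 : M -> Prop) : graded_submodule MG K1 -> graded_submodule MG K2 ->
  graded_submodule MG (fun x => K1 x /\ K2 x).
Proof.
move=> [[a0 aD aZ] ag] [[b0 bD bZ] bg]; split; first split.
- by [].
- by move=> x y [h1 h2] [h3 h4]; split; [apply: aD|apply: bD].
- by move=> r x [h1 h2]; split; [apply: aZ|apply: bZ].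
move=> x [h1 h2]; have [l1 [d1 hl1]] := ag x h1; have [l2 [d2 hl2]] := bg x h2.
exists l1; split => // p hp; split; first exact: hl1.
case: (decomp_uniq (mgrade_ds MG) d1 d2 hp) => [->//|[q [hq [_ <-]]]].
exact: hl2.
Qed.

Lemma qpV_int (K1 K2 : M -> Prop) Q : submodule K1 -> submodule K2 ->
  qpV MG (fun x => K1 x /\ K2 x) Q <-> qpV MG K1 Q \/ qpV MG K2 Q.
Proof.
move=> s1 s2; split; last first.
  case=> /qpV_char [hQ h]; apply/qpV_char; split => // c hc [n hn]; apply: h => //;
    by exists n => m; case: (hn m).
move=> hV; have hQ := hV.1.
case: (pselect (qpV MG K1 Q)) => h1; first by left.
case: (pselect (qpV MG K2 Q)) => h2; first by right.
exfalso.
have [c1 [hc1 [n1 hn1] nr1]] := notqpV hQ h1.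
have [c2 [hc2 [n2 hn2] nr2]] := notqpV hQ h2.
have i1 : colon K1 (c1 ^+ n1.+1) by rewrite exprS; case: (colon_ideal s1) => _ _; apply.
have i2 : colon K2 (c2 ^+ n2.+1) by rewrite exprS; case: (colon_ideal s2) => _ _; apply.
have hd : hR RG (c1 ^+ n1.+1 * c2 ^+ n2.+1).
  have [g1 e1] := hpowS' n1 hc1; have [g2 e2] := hpowS' n2 hc2.
  by exists (gmul g1 g2); apply: rgrade_mul.
have := (qpV_char _ _).1 hV; case=> _ h.
have := h _ hd; case.
  exists 1%N; rewrite expr1 => m; split.
    by rewrite -scalerA; apply: i1.
  by rewrite mulrC -scalerA; apply: i2.
move=> k hk; have [] := qp_prime hQ (hpowS' n1 hc1) (hpowS' n2 hc2) (ex_intro _ k hk).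
  by move/rad_pow.
by move/rad_pow.
Qed.

Lemma qc_ext (A B : (M -> Prop) -> Prop) : (forall Q, A Q <-> B Q) ->
  quasi_compact MG A -> quasi_compact MG B.
Proof.
move=> e qA F Fo Fc; have [s [h1 h2]] := qA F Fo (fun Q hQ => Fc Q ((e Q).1 hQ)).
by exists s; split => // Q /e; apply: h2.
Qed.

Lemma qc_union (A : (M -> Prop) -> Prop) (Bs : seq ((M -> Prop) -> Prop)) :
  (forall B, List.In B Bs -> quasi_compact MG B /\ forall Q, B Q -> A Q) ->
  (forall Q, A Q -> exists B, List.In B Bs /\ B Q) -> quasi_compact MG A.
Proof.
move=> hB hA F Fo Fc.
have [s [s1 s2]] : exists s, (forall U, List.In U s -> F U) /\
    forall Q, (exists B, List.In B Bs /\ B Q) -> exists U, List.In U s /\ U Q.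
  elim: Bs hB {hA} => [|B Bs IH] hB; first by exists [::]; split => // Q [? [[]]].
  have [s [s1 s2]] := IH (fun B' h => hB B' (or_intror h)).
  have [qB sB] := hB B (or_introl erefl).
  have [t [t1 t2]] := qB F Fo (fun Q h => Fc Q (sB Q h)).
  exists (t ++ s); split.
    by move=> U /In_cat [h|h]; [exact: t1|exact: s1].
  move=> Q [B' [[<-|h] hQ]].
    by have [U [hU UQ]] := t2 Q hQ; exists U; split => //; apply/In_cat; left.
  have [U [hU UQ]] := s2 Q (ex_intro _ B' (conj h hQ)).
  by exists U; split => //; apply/In_cat; right.
by exists s; split => // Q /hA /s2.
Qed.

Lemma cover_D (U : (M -> Prop) -> Prop) : qz_open MG U -> quasi_compact MG U ->
  exists fs : seq R, (forall f, List.In f fs -> hR RG f /\ forall Q, Dset f Q -> U Q) /\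
    forall Q, U Q -> exists f, List.In f fs /\ Dset f Q.
Proof.
move=> oU qU.
pose F B := exists f, [/\ hR RG f, B = Dset f & forall Q, Dset f Q -> U Q].
have [s [s1 s2]] : exists s : seq ((M -> Prop) -> Prop), (forall B, List.In B s -> F B) /\
    (forall Q, U Q -> exists B, List.In B s /\ B Q).
  apply: qU.
    by move=> B [f [hf -> _]]; apply: Dset_open.
  move=> Q hQ; have [f [hf DQ sub]] := basis_D oU hQ.
  by exists (Dset f); split => //; exists f.
have [fs [f1 f2]] : exists fs : seq R, (forall f, List.In f fs -> hR RG f /\ forall Q, Dset f Q -> U Q) /\
    forall B, List.In B s -> exists f, List.In f fs /\ B = Dset f.
  elim: (s) s1 => [|B s' IH] hs; first by exists [::].
  have [fs [f1 f2]] := IH (fun B' h => hs B' (or_intror h)).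
  have [f [hf eB sub]] := hs B (or_introl erefl).
  exists (f :: fs); split.
    by move=> f' [<-|h]; [split|exact: f1].
  move=> B' [<-|h]; first by exists f; split => //; left.
  by have [f' [h1 h2]] := f2 B' h; exists f'; split => //; right.
exists fs; split => // Q /s2 [B [hB BQ]].
have [f [hf eB]] := f2 B hB; by exists f; split => //; rewrite -eB.
Qed.

Fixpoint mp (s t : seq R) : seq R :=
  match s with [::] => [::] | x :: s' => map (fun y => x * y) t ++ mp s' t end.

Lemma In_mp z s t : List.In z (mp s t) <-> exists x y, [/\ List.In x s, List.In y t & z = x * y].
Proof.
elim: s => [|x s IH] /=; first by split => // [[x [y [[]]]]].
rewrite In_cat In_map IH; split.
  case=> [[y [hy ->]]|[x' [y [h1 h2 ->]]]]; first by exists x, y; split => //; left.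
  by exists x', y; split => //; right.
by case=> x' [y [[<-|h1] h2 ->]]; [left; exists y|right; exists x', y].
Qed.

End Main.

Unset Implicit Arguments.

Theorem theorem3p17 (G : group_str) (R : comNzRingType) (RG : graded_ring G R)
    (M : lmodType R) (MG : graded_module RG M) :
  psi_q_surjective MG ->
  (forall U V, qz_open MG U -> quasi_compact MG U ->
               qz_open MG V -> quasi_compact MG V ->
     qz_open MG (fun Q => U Q /\ V Q) /\
     quasi_compact MG (fun Q => U Q /\ V Q)) /\
  (forall U, qz_open MG U -> forall Q, U Q ->
     exists B, [/\ qz_open MG B, quasi_compact MG B, B Q &
                   forall Q', B Q' -> U Q']).
Proof.
move=> surj; split.
- move=> U V oU qU oV qV.
  have [K1 [g1 e1]] := oU; have [K2 [g2 e2]] := oV.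
  split.
    exists (fun x => K1 x /\ K2 x); split; first exact: Kint_graded.
    move=> Q; rewrite qpV_int; [|exact: g1.1|exact: g2.1].
    rewrite e1 e2; tauto.
  have [fu [fu1 fu2]] := cover_D oU qU; have [fv [fv1 fv2]] := cover_D oV qV.
  apply: (qc_union (Bs := map (fun h => Dset MG h) (mp fu fv))).
    move=> B /In_map [h [/In_mp [f [g [hf hg ->]]] ->]].
    have [hRf sf] := fu1 f hf; have [hRg sg] := fv1 g hg.
    split.
      apply: Dset_qc => //; case: hRf => a ha; case: hRg => b hb.
      by exists (gmul a b); apply: rgrade_mul.
    move=> Q [hQ nr]; have cI := colon_ideal (qp_sub hQ).
    split; [apply: sf|apply: sg]; split => // hr; apply: nr.
      exact: rad_mul.
    by rewrite mulrC; apply: rad_mul.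
  move=> Q [UQ VQ]; have [f [hf Df]] := fu2 Q UQ; have [g [hg Dg]] := fv2 Q VQ.
  have [hRf _] := fu1 f hf; have [hRg _] := fv1 g hg.
  exists (Dset MG (f * g)); split.
    by apply/In_map; exists (f * g); split => //; apply/In_mp; exists f, g.
  split; first exact: Df.1.
  by move=> /(qp_prime Df.1 hRf hRg) [h|h]; [exact: Df.2 h|exact: Dg.2 h].
- move=> U oU Q UQ; have [f [hf DQ sub]] := basis_D oU UQ.
  exists (Dset MG f); split => //; [exact: Dset_open|exact: Dset_qc].
Qed.
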